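(* Let $G=(V,E)$ be a finite graph with a population function $p:V\to\mathbb{R}_{>0}$, let $k\ge 2$, $0<\epsilon<1$, and let $T=p(V)/k$, where $h(W)=\sum_{v\in W}h(v)$ for $W\subseteq V$ and any $h:V\to\mathbb{R}$. Let $P=\{P_1,\dots,P_k\}$ and $P'=\{P_1',\dots,P_k'\}$ be districting plans in $\mathcal{P}_{k,\epsilon}(G)$ with vertex sets $V_1,\dots,V_k$ and $V_1',\dots,V_k'$. Suppose $P'$ is a graph-preserving one-way perturbation of $P$: there are indices $i\ne j$ and a nonempty set $V_{ij}\subseteq V_i$ such that $V_i'=V_i\setminus V_{ij}$, $V_j'=V_j\cup V_{ij}$, $V_m'=V_m$ for all $m\ne i,j$, and the map $w_m\mapsto w_m'$ is an isomorphism between the district dual graphs $G_P$ and $G_{P'}$. Let $a,b:V\to\mathbb{R}$ satisfy $0\le a(v)\le b(v)\le p(v)$ and $b(v)>0$ for all $v\in V$, and for $W\subseteq V$ nonempty write $f(W)=a(W)/b(W)$; define filtration functions on the district dual graphs by $f(w_m)=f(V_m)$ and $f(w_m')=f(V_m')$. Let $\alpha>0$ satisfy $b(W)/p(W)\ge \alpha$ for $W=V_i,V_i',V_j,V_j'$. Let $\mathcal{D}_P$ and $\mathcal{D}_{P'}$ be the degree-$0$ persistence diagrams of the sublevel-set filtrations of $G_P$ and $G_{P'}$ induced by $f$. Then $$d_\infty(\mathcal{D}_P,\mathcal{D}_{P'})\le \frac{2\epsilon}{\alpha(1-\epsilon)}\max\Bigl(\bigl|f(V_{ij})-f(V_i)\bigr|,\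 \bigl|f(V_{ij})-f(V_j)\bigr|\Bigr).$$
   Context: Districting plans: $\mathcal{P}_{k,\epsilon}(G)$ is the set of partitions $P=\{P_1,\dots,P_k\}$ of $G$ into induced subgraphs $P_m=(V_m,E_m)$ on a vertex partition $V=V_1\sqcup\dots\sqcup V_k$, with each $P_m$ connected and $(1-\epsilon)T\le p(V_m)\le(1+\epsilon)T$. District dual graph $G_P$: vertices $w_1,\dots,w_k$ (one per district), with $w_m,w_l$ adjacent iff some edge of $E$ joins $V_m$ and $V_l$. Sublevel-set filtration and degree-0 persistence diagram: for a finite graph $H$ with vertex function $F$, for each $t$ let $H^t$ be the subgraph induced on vertices with $F\le t$ (edges appear once both endpoints are present); the diagram $\mathcal{D}_F$ is the multiset of (birth, death) pairs $(b,d)$, $d\in\mathbb{R}\cup\{\infty\}$, of connected components of $H^t$ as $t$ increases, with the elder rule (on merging, the younger component dies) and $d=\infty$ for components that never die; diagonal points may be ignored. Bottleneck distance $d_\infty$: infimum over partial bijections $\phi$ between the diagrams of the maximum of $\|x-\phi(x)\|_\infty$ over matched points and of the $\ell_\infty$ distance to the diagonal (i.e.\ $(d-b)/2$) over unmatched points, with $\infty-\infty=0$. *)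

(* Defs.v *)
From HB Require Import structures.
From mathcomp Require Import all_boot all_order all_algebra.
From mathcomp Require Import all_classical all_reals.
From mathcomp Require Import ereal.
Set Implicit Arguments. Unset Strict Implicit. Unset Printing Implicit Defensive.
Import Order.TTheory GRing.Theory Num.Theory.
Local Open Scope ring_scope.

Section Defs.
Variable R : realType.

Definition wsum (V : finType) (h : V -> R) (W : {set V}) : R := \sum_(v in W) h v.

Definition induced_connected (V : finType) (E : rel V) (A : {set V}) : Prop :=
  forall x y, x \in A -> y \in A ->
    connect [rel u w | [&& E u w, u \in A & w \in A]] x y.

Definition districting_plan (V : finType) (E : rel V) (p : V -> R) (k : nat)
    (eps : R) (Vm : 'I_k -> {set V}) : Prop :=
  let T := wsum p [set: V] / k%:R in
  (forall v : V, exists m : 'I_k, v \in Vm m) /\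
  (forall m l : 'I_k, m != l -> [disjoint Vm m & Vm l]) /\
  (forall m : 'I_k, induced_connected E (Vm m)) /\
  (forall m : 'I_k, (1 - eps) * T <= wsum p (Vm m) <= (1 + eps) * T).

Definition dual_adj (V : finType) (E : rel V) (k : nat) (Vm : 'I_k -> {set V})
    : rel 'I_k :=
  fun m l => (m != l) && [exists x, [exists y, [&& x \in Vm m, y \in Vm l & E x y]]].

Definition sublevel_rel (I : finType) (adj : rel I) (F : I -> R) (t : R) : rel I :=
  [rel u w | [&& adj u w, F u <= t & F w <= t]].

Definition older (I : finType) (F : I -> R) (u v : I) : bool :=
  (F u < F v) || ((F u == F v) && (enum_rank u < enum_rank v)%N).

(** Elder rule: the component born with vertex v (at time F v) dies at the
    first time t at which v is connected in H^t to an older vertex;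
    it never dies (+oo) otherwise. *)
Definition death (I : finType) (adj : rel I) (F : I -> R) (v : I) : \bar R :=
  ereal_inf [set (t%:E) | t in [set t : R | F v <= t /\
      exists u, older F u v /\ connect (sublevel_rel adj F t) u v]]%classic.

(** Degree-0 persistence diagram, as a finite family of (birth, death)
    points indexed by the vertices (points on the diagonal included;
    they do not affect the bottleneck distance). *)
Definition pdiagram (I : finType) (adj : rel I) (F : I -> R) : I -> R * \bar R :=
  fun v => (F v, death adj F v).

Definition edist (d d' : \bar R) : \bar R :=
  match d, d' with
  | EFin x, EFin y => `|x - y|%:E
  | +oo%E, +oo%E => 0%E
  | -oo%E, -oo%E => 0%E
  | _, _ => +oo%E
  end.

Definition linf_pt (x y : R * \bar R) : \bar R :=
  Order.max (`|x.1 - y.1|)%:E (edist x.2 y.2).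

Definition diag_dist (x : R * \bar R) : \bar R :=
  match x.2 with
  | EFin d => ((d - x.1) / 2)%:E
  | _ => +oo%E
  end.

Definition partial_bij (I1 I2 : finType) (mu : I1 -> option I2) : Prop :=
  forall i i' j, mu i = Some j -> mu i' = Some j -> i = i'.

Definition matching_cost (I1 I2 : finType) (D1 : I1 -> R * \bar R)
    (D2 : I2 -> R * \bar R) (mu : I1 -> option I2) : \bar R :=
  ereal_sup ([set 0%E] `|`
    [set c | exists i j, mu i = Some j /\ c = linf_pt (D1 i) (D2 j)] `|`
    [set c | exists i, mu i = None /\ c = diag_dist (D1 i)] `|`
    [set c | exists j, (forall i, mu i != Some j) /\ c = diag_dist (D2 j)])%classic.

Definition bottleneck (I1 I2 : finType) (D1 : I1 -> R * \bar R)
    (D2 : I2 -> R * \bar R) : \bar R :=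
  ereal_inf [set matching_cost D1 D2 mu | mu in [set mu | partial_bij mu]]%classic.

End Defs.

(* Main.v *)
Require Import Defs.
From HB Require Import structures.
From mathcomp Require Import all_boot all_order all_algebra.
From mathcomp Require Import all_classical all_reals.
From mathcomp Require Import ereal.
From mathcomp Require Import lra ring.
Import Order.TTheory GRing.Theory Num.Theory.
Local Open Scope ring_scope.

Module StabMod.
Set Implicit Arguments. Unset Strict Implicit. Unset Printing Implicit Defensive.
Local Open Scope classical_set_scope.

Section Stab.
Variables (R : realType) (I : finType) (adj : rel I).
Hypothesis adj_sym : symmetric adj.

Definition sto (lt : rel I) :=
  [/\ irreflexive lt, transitive lt & (forall x y, x != y -> lt x y || lt y x)].
Definition compat (F : I -> R) (lt : rel I) := forall x y, F x < F y -> lt x y.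

Definition Tset (F : I -> R) (x : I) (A : I -> Prop) : set R :=
  [set t : R | F x <= t /\ exists y, A y /\ connect (sublevel_rel adj F t) y x]%classic.

Definition gdeath (F : I -> R) (lt : rel I) (v : I) : \bar R :=
  ereal_inf [set (t%:E) | t in Tset F v (fun y => lt y v)]%classic.

Lemma death_gdeath F v : death adj F v = gdeath F (older F) v.
Proof. by []. Qed.

Definition lex (G : I -> R) (lt : rel I) : rel I :=
  fun x y => (G x < G y) || ((G x == G y) && lt x y).

Lemma lex_sto G lt : sto lt -> sto (lex G lt).
Proof.
case=> irr tr tot; split.
- by move=> x; rewrite /lex ltxx eqxx irr.
- move=> y x z; rewrite /lex => /orP[h1|/andP[/eqP e1 l1]] /orP[h2|/andP[/eqP e2 l2]].
  + by rewrite (lt_trans h1 h2).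
  + by rewrite -e2 h1.
  + by rewrite e1 h2.
  + by rewrite e1 e2 eqxx (tr _ _ _ l1 l2) orbT.
- move=> x y nxy; rewrite /lex; case: (ltgtP (G x) (G y)) => //= e.
  by rewrite /= tot //= ?e ?eqxx ?andTb ?orbF; move: (tot _ _ nxy).
Qed.

Lemma lex_compat G lt : compat G (lex G lt).
Proof. by move=> x y h; rewrite /lex h. Qed.

Lemma rank_sto : sto (fun x y : I => (enum_rank x < enum_rank y)%N).
Proof.
split.
- by move=> x; rewrite ltnn.
- by move=> y x z; apply: ltn_trans.
- move=> x y nxy; case: (ltngtP (enum_rank x) (enum_rank y)) => // /val_inj/enum_rank_inj e.
  by rewrite e eqxx in nxy.
Qed.

Lemma older_lex F : older F = lex F (fun x y : I => (enum_rank x < enum_rank y)%N).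
Proof. by []. Qed.

Lemma sto_asym lt : sto lt -> forall x y, lt x y -> lt y x -> False.
Proof. by case=> irr tr _ x y h1 h2; move: (tr _ _ _ h1 h2); rewrite irr. Qed.

Lemma compat_le F lt : sto lt -> compat F lt -> forall x y, lt x y -> F x <= F y.
Proof.
move=> s c x y h; rewrite leNgt; apply/negP => /c h'; exact: (sto_asym s h h').
Qed.


Lemma edist_ge0 (a b : \bar R) : (0 <= edist a b)%E.
Proof. by case: a; case: b => //= *; rewrite lee_fin. Qed.

Lemma inf_shift (S S' : set R) (b b' d : R) : 0 <= d ->
  lbound S b -> lbound S' b' ->
  (forall t, S t -> S' (t + d)) -> (forall t, S' t -> S (t + d)) ->
  (edist (ereal_inf [set t%:E | t in S]) (ereal_inf [set t%:E | t in S']) <= d%:E)%E.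
Proof.
move=> d0 lbS lbS' h1 h2.
case: (pselect (exists t, S t)) => [[t St]|nS0]; last first.
  have S0 : S = set0 by apply/seteqP; split => // t St; apply: nS0; exists t.
  have -> : S' = set0.
    by apply/seteqP; split => // t /h2 St; apply: nS0; exists (t + d).
  by rewrite S0 !image_set0 ereal_inf0 /= lee_fin.
have nS : S !=set0 by exists t.
have nS' : S' !=set0 by exists (t + d); exact: h1.
have hlS : has_lbound S by exists b.
have hlS' : has_lbound S' by exists b'.
rewrite !ereal_inf_EFin //= lee_fin.
have k1 : inf S' <= inf S + d.
  rewrite -lerBlDr; apply: lb_le_inf => // x Sx.
  rewrite lerBlDr; apply: ge_inf => //; exact: h1.
have k2 : inf S <= inf S' + d.
  rewrite -lerBlDr; apply: lb_le_inf => // x Sx.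
  rewrite lerBlDr; apply: ge_inf => //; exact: h2.
by rewrite ler_norml; apply/andP; split; lra.
Qed.

Lemma Tset_shift F F' (d : R) x A : (forall v, `|F v - F' v| <= d) ->
  forall t, Tset F x A t -> Tset F' x A (t + d).
Proof.
move=> hd t [hx [y [Ay cy]]]; have le1 : forall z, F' z <= F z + d.
  by move=> z; move: (hd z); rewrite distrC ler_norml => /andP[_]; rewrite lerBlDr addrC.
split; first by apply: le_trans (le1 x) _; rewrite lerD2r.
exists y; split => //; apply: connect_sub cy => u w /=.
case/and3P => a1 a2 a3; apply: connect1; apply/and3P; split => //.
  by rewrite (le_trans (le1 u)) ?lerD2r.
by rewrite (le_trans (le1 w)) ?lerD2r.
Qed.

Lemma L1 F F' lt (d : R) : (forall v, `|F v - F' v| <= d) ->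
  forall v, (edist (gdeath F lt v) (gdeath F' lt v) <= d%:E)%E.
Proof.
move=> hd v; have d0 : 0 <= d by apply: le_trans (hd v).
apply: (@inf_shift _ _ (F v) (F' v)) => //.
- by move=> t [].
- by move=> t [].
- exact: Tset_shift.
- apply: Tset_shift => z; by rewrite distrC.
Qed.


Lemma edist_trans (a b c : \bar R) (r1 r2 : R) :
  (edist a b <= r1%:E)%E -> (edist b c <= r2%:E)%E -> (edist a c <= (r1 + r2)%:E)%E.
Proof.
case: a => [x||]; case: b => [y||]; case: c => [z||] //=; rewrite ?lee_fin.
- by move=> h1 h2; apply: le_trans (ler_distD y x z) _; apply: lerD.
all: by move=> h1 h2; apply: addr_ge0.
Qed.

Definition inv (lt1 lt2 : rel I) : {set I * I} :=
  [set p | lt1 p.1 p.2 && lt2 p.2 p.1].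

Lemma inv0_eq lt1 lt2 : sto lt1 -> sto lt2 -> inv lt1 lt2 = finset.set0 -> lt1 = lt2.
Proof.
move=> [irr1 tr1 tot1] [irr2 tr2 tot2] h0.
have nin : forall x y, (x, y) \in inv lt1 lt2 -> False by move=> x y; rewrite h0 inE.
apply/funext => x; apply/funext => y; apply/idP/idP => h.
- have nxy : x != y by apply/eqP => e; move: h; rewrite e irr1.
  case/orP: (tot2 _ _ nxy) => // h'; exfalso; apply: (nin x y); by rewrite inE /= h h'.
- have nxy : x != y by apply/eqP => e; move: h; rewrite e irr2.
  case/orP: (tot1 _ _ nxy) => // h'; exfalso; apply: (nin y x); by rewrite inE /= h h'.
Qed.

Lemma Tset_ext F x (A B : I -> Prop) : (forall y, A y <-> B y) -> Tset F x A = Tset F x B.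
Proof.
move=> h; apply/seteqP; split => t [h1 [y [Ay cy]]]; split => //; exists y; split => //;
  by apply/h.
Qed.

Lemma Tset_U F x (A : I -> Prop) z :
  Tset F x (fun y => A y \/ y = z) = Tset F x A `|` Tset F x (fun y => y = z).
Proof.
apply/seteqP; split => t.
- by move=> [h1 [y [[Ay|Ay] cy]]]; [left|right]; split => //; exists y.
- by case=> -[h1 [y [Ay cy]]]; split => //; exists y; split => //; [left|right].
Qed.

Lemma Tset_up F x A s t : Tset F x A s -> s <= t -> Tset F x A t.
Proof.
move=> [h1 [y [Ay cy]]] st; split; first exact: le_trans st.
exists y; split => //; apply: connect_sub cy => a b /and3P[e1 e2 e3].
by apply: connect1; apply/and3P; split => //; apply: le_trans st.
Qed.

Lemma upset_total (X Y : set R) : (forall s t, X s -> s <= t -> X t) ->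
  (forall s t, Y s -> s <= t -> Y t) -> X `<=` Y \/ Y `<=` X.
Proof.
move=> uX uY; case: (pselect (X `<=` Y)) => [|nXY]; [by left|right].
have [a [Xa nYa]] : exists a, X a /\ ~ Y a.
  apply: contra_notP nXY => h t Xt; apply: contra_notP h => nYt; by exists t.
move=> b Yb; case: (leP b a) => ba; first by exfalso; apply: nYa; exact: uY ba.
exact: uX (ltW ba).
Qed.


Lemma adj_pair lt1 lt2 : sto lt1 -> sto lt2 -> inv lt1 lt2 != finset.set0 ->
  exists u v, [/\ lt1 u v, lt2 v u & forall w, ~~ (lt1 u w && lt1 w v)].
Proof.
move=> s1 s2 /set0Pn[p0 hp0].
pose gap (p : I * I) := #|[set w | lt1 p.1 w && lt1 w p.2]%SET|.
case: (@arg_minnP _ p0 (fun p => p \in inv lt1 lt2) gap hp0) => [[u v]] huv hmin.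
move: (huv); rewrite inE /= => /andP[l1 l2].
exists u, v; split => // w; apply/negP => /andP[uw wv].
have [irr1 tr1 tot1] := s1; have [irr2 tr2 tot2] := s2.
have nuw : u != w by apply/eqP => e; move: uw; rewrite e irr1.
case/orP: (tot2 _ _ nuw) => h.
- have hv : (w, v) \in inv lt1 lt2 by rewrite inE /= wv (tr2 _ _ _ l2 h).
  have := hmin _ hv; rewrite /gap /= => hle.
  have hp : [set z | lt1 w z && lt1 z v]%SET \proper [set z | lt1 u z && lt1 z v]%SET.
    apply/properP; split.
    - by apply/fintype.subsetP => z; rewrite !inE => /andP[a b]; rewrite (tr1 _ _ _ uw a) b.
    - by exists w; rewrite !inE ?uw ?wv ?irr1.
  by move: (proper_card hp); rewrite ltnNge hle.
- have hv : (u, w) \in inv lt1 lt2 by rewrite inE /= uw h.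
  have := hmin _ hv; rewrite /gap /= => hle.
  have hp : [set z | lt1 u z && lt1 z w]%SET \proper [set z | lt1 u z && lt1 z v]%SET.
    apply/properP; split.
    - by apply/fintype.subsetP => z; rewrite !inE => /andP[a b]; rewrite a (tr1 _ _ _ b wv).
    - by exists w; rewrite !inE ?uw ?wv ?irr1 ?andbF.
  by move: (proper_card hp); rewrite ltnNge hle.
Qed.

Definition tsw (u v x : I) := if x == u then v else if x == v then u else x.

Lemma tswK u v : involutive (tsw u v).
Proof.
move=> x; rewrite /tsw; case: (eqVneq x u) => [->|xu]; first by rewrite eqxx; case: eqP.
case: (eqVneq x v) => [->|xv]; first by rewrite eqxx.
by rewrite (negbTE xu) (negbTE xv).
Qed.

Lemma tsw_inj u v : injective (tsw u v).
Proof. exact: inv_inj (tswK u v). Qed.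

Lemma ultra_cases (X Y Z : set R) (E : set R -> \bar R) :
  (forall s t, X s -> s <= t -> X t) -> (forall s t, Y s -> s <= t -> Y t) ->
  (forall s t, Z s -> s <= t -> Z t) ->
  X `&` Z `<=` Y -> Y `&` Z `<=` X ->
  (E (X `|` Z) = E X /\ E Y = E (Y `|` Z)) \/ (E Y = E X /\ E (X `|` Z) = E (Y `|` Z)).
Proof.
move=> uX uY uZ hXZ hYZ.
have U1 : forall A B : set R, B `<=` A -> A `|` B = A.
  by move=> A B h; apply/seteqP; split => [t [//|/h//]|t At]; left.
have U2 : forall A B : set R, A `<=` B -> A `|` B = B.
  by move=> A B h; apply/seteqP; split => [t [/h//|//]|t At]; right.
case: (upset_total uX uZ) => [XZ|ZX].
- have XY : X `<=` Y by move=> t Xt; apply: hXZ; split => //; exact: XZ.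
  case: (upset_total uY uZ) => [YZ|ZY].
  + have YX : Y `<=` X by move=> t Yt; apply: hYZ; split => //; exact: YZ.
    have eXY : X = Y by apply/seteqP; split.
    by right; rewrite eXY U2 // U2.
  + have ZX : Z `<=` X by move=> t Zt; apply: hYZ; split => //; exact: ZY.
    by left; rewrite U1 // U1.
- have ZY : Z `<=` Y by move=> t Zt; apply: hXZ; split => //; exact: ZX.
  by left; rewrite U1 // U1.
Qed.


Lemma gdeath_ext (F : I -> R) (lt lt' : rel I) w : (forall y, lt y w = lt' y w) -> gdeath F lt w = gdeath F lt' w.
Proof.
move=> h; rewrite /gdeath; congr ereal_inf; congr image; apply: Tset_ext => y.
by rewrite h.
Qed.

Lemma sub_csym (F : I -> R) (t : R) : connect_sym (sublevel_rel adj F t).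
Proof.
apply: sym_connect_sym => x y; rewrite /sublevel_rel /= adj_sym; case: (adj y x); case: (F x <= t); by case: (F y <= t).
Qed.

Section Swap.
Variables (F : I -> R) (lt1 lt2 : rel I) (u v : I).
Hypotheses (s1 : sto lt1) (s2 : sto lt2) (c1 : compat F lt1) (l1 : lt1 u v) (l2 : lt2 v u)
  (hadj : forall w, ~~ (lt1 u w && lt1 w v)) (Fuv : F u = F v).

Let lt1' := fun x y => lt1 (tsw u v x) (tsw u v y).

Lemma uv_neq : u != v.
Proof. by apply/eqP => e; move: l1; rewrite e; case: s1 => ->. Qed.

Lemma adjL w : w != u -> w != v -> lt1 u w = lt1 v w.
Proof.
case: s1 => irr tr tot wu wv; apply/idP/idP => h.
- have : v != w by rewrite eq_sym.
  move/tot; case/orP => // h'; exfalso; by move: (hadj w); rewrite h h'.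
- exact: tr h.
Qed.

Lemma adjR w : w != u -> w != v -> lt1 w u = lt1 w v.
Proof.
case: s1 => irr tr tot wu wv; apply/idP/idP => h.
- exact: tr l1.
- move: (tot _ _ wu); case/orP => // h'; exfalso; by move: (hadj w); rewrite h h'.
Qed.

Lemma agree x y : ~~ ((x == u) && (y == v)) -> ~~ ((x == v) && (y == u)) ->
  lt1' x y = lt1 x y.
Proof.
have uv := uv_neq; have vu : v != u by rewrite eq_sym.
case: s1 => irr _ _.
rewrite /lt1' /tsw; case: (eqVneq x u) => [->|xu]; case: (eqVneq y u) => [->|yu];
  rewrite ?eqxx ?(negbTE uv) ?(negbTE vu) ?irr //=.
- case: (eqVneq y v) => [->|yv]; rewrite ?eqxx //= => _ _; by rewrite (adjL yu yv).
- case: (eqVneq x v) => [->|xv]; rewrite ?eqxx //= => _ _; by rewrite (adjR xu xv).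
- case: (eqVneq x v) => [->|xv]; case: (eqVneq y v) => [->|yv]; rewrite ?eqxx ?irr //= => _ _.
  + by rewrite -(adjL yu yv).
  + by rewrite -(adjR xu xv).
Qed.


Lemma sto' : sto lt1'.
Proof.
case: s1 => irr tr tot; split.
- by move=> x; rewrite /lt1' irr.
- by move=> y x z; rewrite /lt1'; apply: tr.
- move=> x y nxy; apply: tot; apply: contra nxy => /eqP e; apply/eqP; exact: tsw_inj e.
Qed.

Lemma Ftsw x : F (tsw u v x) = F x.
Proof.
by rewrite /tsw; case: (eqVneq x u) => [->|xu] //; case: (eqVneq x v) => [->|xv].
Qed.

Lemma compat' : compat F lt1'.
Proof. by move=> x y h; apply: c1; rewrite !Ftsw. Qed.

Lemma tsw_u : tsw u v u = v. Proof. by rewrite /tsw eqxx. Qed.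
Lemma tsw_v : tsw u v v = u.
Proof. by rewrite /tsw eqxx eq_sym (negbTE uv_neq). Qed.

Lemma inv_proper : inv lt1' lt2 \proper inv lt1 lt2.
Proof.
have uv := uv_neq.
apply/properP; split.
- apply/fintype.subsetP => -[x y]; rewrite !inE /= => /andP[a b].
  case: (eqVneq x u) => [ex|xu].
    case: (eqVneq y v) => [ey|yv].
      by exfalso; move: a; rewrite ex ey /lt1' tsw_u tsw_v => a; exact: (sto_asym s1 l1 a).
    rewrite -(agree (x:=x) (y:=y)) ?a ?b //; first by rewrite (negbTE yv) andbF.
    by rewrite ex (negbTE uv).
  case: (eqVneq x v) => [ex|xv].
    case: (eqVneq y u) => [ey|yu].
      by exfalso; move: b; rewrite ex ey => b; exact: (sto_asym s2 l2 b).
    rewrite -(agree (x:=x) (y:=y)) ?a ?b //; last by rewrite (negbTE yu) andbF.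
    by rewrite ex eq_sym (negbTE uv).
  by rewrite -(agree (x:=x) (y:=y)) ?a ?b // ?(negbTE xu) ?(negbTE xv).
- exists (u, v); first by rewrite inE /= l1 l2.
  rewrite inE /= /lt1' tsw_u tsw_v.
  apply/negP => /andP[h _]; exact: (sto_asym s1 l1 h).
Qed.

Lemma tsw_o x : x != u -> x != v -> tsw u v x = x.
Proof. by move=> xu xv; rewrite /tsw (negbTE xu) (negbTE xv). Qed.

Lemma gd_other w : w != u -> w != v -> gdeath F lt1' w = gdeath F lt1 w.
Proof.
move=> wu wv; apply: gdeath_ext => y; apply: agree.
  by rewrite (negbTE wv) andbF.
by rewrite (negbTE wu) andbF.
Qed.

Lemma gd_uv : (gdeath F lt1' u = gdeath F lt1 u /\ gdeath F lt1' v = gdeath F lt1 v) \/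
              (gdeath F lt1' v = gdeath F lt1 u /\ gdeath F lt1' u = gdeath F lt1 v).
Proof.
have uv := uv_neq; case: (s1) => irr tr tot.
pose S := fun y => is_true (lt1 y u).
pose E := fun A : set R => ereal_inf [set t%:E | t in A].
have e1 : gdeath F lt1 u = E (Tset F u S) by [].
have e2 : gdeath F lt1 v = E (Tset F v S `|` Tset F v (fun y => y = u)).
  rewrite -Tset_U; congr E; apply: Tset_ext => y; rewrite /S; split.
  - move=> h; case: (eqVneq y u) => [->|yu]; [by right|left].
    have yv : y != v by apply: contraTneq h => ->; rewrite irr.
    by rewrite (adjR yu yv).
  - by case=> [h|->] //; exact: tr l1.
have e3 : gdeath F lt1' u = E (Tset F u S `|` Tset F u (fun y => y = v)).
  rewrite -Tset_U; congr E; apply: Tset_ext => y; rewrite /S /lt1' tsw_u; split.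
  - case: (eqVneq y u) => [->|yu]; first by rewrite tsw_u irr.
    case: (eqVneq y v) => [->|yv]; first by right.
    by rewrite tsw_o // -(adjR yu yv); left.
  - case=> [h|->]; last by rewrite tsw_v.
    have yu : y != u by apply: contraTneq h => ->; rewrite irr.
    have yv : y != v by apply: contraTneq h => ->; apply/negP => h'; exact: (sto_asym s1 l1 h').
    by rewrite tsw_o // -(adjR yu yv).
have e4 : gdeath F lt1' v = E (Tset F v S).
  congr E; apply: Tset_ext => y; rewrite /S /lt1' tsw_v; split.
  - case: (eqVneq y u) => [->|yu]; first by rewrite tsw_u => h; exfalso; exact: (sto_asym s1 l1 h).
    case: (eqVneq y v) => [->|yv]; first by rewrite tsw_v irr.
    by rewrite tsw_o.
  - move=> h; have yu : y != u by apply: contraTneq h => ->; rewrite irr.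
    have yv : y != v by apply: contraTneq h => ->; apply/negP => h'; exact: (sto_asym s1 l1 h').
    by rewrite tsw_o.
have eZ : Tset F v (fun y => y = u) = Tset F u (fun y => y = v).
  apply/seteqP; split => t [h1 [y [-> cy]]].
  - split; first by rewrite Fuv.
    by exists v; split => //; rewrite sub_csym.
  - split; first by rewrite -Fuv.
    by exists u; split => //; rewrite sub_csym.
rewrite e1 e2 e3 e4 eZ; apply: ultra_cases.
- by move=> *; apply: Tset_up; eauto.
- by move=> *; apply: Tset_up; eauto.
- by move=> *; apply: Tset_up; eauto.
- move=> t [[h1 [y [Sy cy]]] [h2 [z [-> cz]]]]; split; first by rewrite -Fuv.
  exists y; split => //; apply: connect_trans cy _; by rewrite sub_csym.
- move=> t [[h1 [y [Sy cy]]] [h2 [z [-> cz]]]]; split; first by rewrite Fuv.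
  by exists y; split => //; apply: connect_trans cy _.
Qed.

End Swap.


Lemma L2 (F : I -> R) n : forall lt1 lt2, (#|inv lt1 lt2| <= n)%N ->
  sto lt1 -> sto lt2 -> compat F lt1 -> compat F lt2 ->
  exists sg : I -> I, injective sg /\
    forall x, F (sg x) = F x /\ gdeath F lt2 (sg x) = gdeath F lt1 x.
Proof.
elim: n => [|n IH] lt1 lt2 hn s1 s2 c1 c2.
  have h0 : inv lt1 lt2 = finset.set0 by apply/eqP; rewrite -cards_eq0 -leqn0.
  by rewrite (inv0_eq s1 s2 h0); exists id; split => // x; split.
case: (eqVneq (inv lt1 lt2) finset.set0) => [h0|hne].
  by rewrite (inv0_eq s1 s2 h0); exists id; split => // x; split.
have [u [v [l1 l2 hadj]]] := adj_pair s1 s2 hne.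
have Fuv : F u = F v.
  by apply/eqP; rewrite eq_le (compat_le s1 c1 l1) (compat_le s2 c2 l2).
have s1' := sto' u v s1.
have c1' := compat' c1 Fuv.
have hp := inv_proper s1 s2 l1 l2 hadj.
have hn' : (#|inv (fun x y => lt1 (tsw u v x) (tsw u v y)) lt2| <= n)%N.
  by rewrite -ltnS; exact: leq_trans (proper_card hp) hn.
have [sg [sgi hsg]] := IH _ _ hn' s1' s2 c1' c2.
have huv := uv_neq s1 l1.
case: (gd_uv s1 l1 hadj Fuv) => [[e1 e2]|[e1 e2]].
- exists sg; split => // x; have [h1 h2] := hsg x; split => //; rewrite h2.
  case: (eqVneq x u) => [->//|xu]; case: (eqVneq x v) => [->//|xv].
  exact: gd_other.
- exists (sg \o tsw u v); split; first exact: inj_comp sgi (@tsw_inj u v).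
  move=> x; have [h1 h2] := hsg (tsw u v x); split; first by rewrite /= h1 (Ftsw Fuv).
  rewrite /= h2.
  case: (eqVneq x u) => [->|xu]; first by rewrite tsw_u.
  case: (eqVneq x v) => [->|xv]; first by rewrite (tsw_v s1 l1).
  by rewrite tsw_o // gd_other.
Qed.


Lemma conv_le (a b a' b' s : R) : 0 <= s -> s <= 1 -> a <= b -> a' <= b' ->
  a + s * (a' - a) <= b + s * (b' - b).
Proof. move=> *; nra. Qed.

Lemma cross_le (a b a' b' s : R) : a <= b -> b' <= a' -> 0 <= s ->
  s <= (b - a) / ((b - a) + (a' - b')) -> a + s * (a' - a) <= b + s * (b' - b).
Proof.
move=> h1 h2 h3 h4.
have [e|ne] := eqVneq ((b - a) + (a' - b')) 0.
  have ea : b - a = 0 by lra.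
  have eb : a' - b' = 0 by lra.
  have -> : b = a by lra. have -> : b' = a' by lra. by [].
have pos : 0 < (b - a) + (a' - b') by rewrite lt_neqAle eq_sym ne /=; lra.
move: h4; rewrite ler_pdivlMr // => h4; nra.
Qed.

Lemma cross_eq (a b a' b' : R) : a <= b -> b' <= a' ->
  let s := (b - a) / ((b - a) + (a' - b')) in a + s * (a' - a) = b + s * (b' - b).
Proof.
move=> h1 h2 s.
have [e|ne] := eqVneq ((b - a) + (a' - b')) 0.
  have -> : b = a by lra. have -> : b' = a' by lra. by [].
have e : s * ((b - a) + (a' - b')) = b - a by rewrite /s mulfVK.
lra.
Qed.

Lemma s_bounds (a b a' b' : R) : a <= b -> b' <= a' ->
  0 <= (b - a) / ((b - a) + (a' - b')) <= 1.
Proof.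
move=> h1 h2; apply/andP; split; first by apply: divr_ge0; lra.
have [e|ne] := eqVneq ((b - a) + (a' - b')) 0; first by rewrite e invr0 mulr0.
have pos : 0 < (b - a) + (a' - b') by rewrite lt_neqAle eq_sym ne /=; lra.
by rewrite ler_pdivrMr // mul1r; lra.
Qed.


Lemma stab n : forall (F F' : I -> R) lt lt' (d : R), (#|inv lt lt'| <= n)%N ->
  sto lt -> sto lt' -> compat F lt -> compat F' lt' ->
  (forall v, `|F v - F' v| <= d) ->
  exists sg : I -> I, injective sg /\ forall v, `|F v - F' (sg v)| <= d /\
    (edist (gdeath F lt v) (gdeath F' lt' (sg v)) <= d%:E)%E.
Proof.
elim: n => [|n IH] F F' lt lt' d hn s s' c c' hd.
  have h0 : inv lt lt' = finset.set0 by apply/eqP; rewrite -cards_eq0 -leqn0.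
  rewrite -(inv0_eq s s' h0); exists id; split => // v; split; first exact: hd.
  exact: L1.
case: (eqVneq (inv lt lt') finset.set0) => [h0|hne].
  rewrite -(inv0_eq s s' h0); exists id; split => // v; split; first exact: hd.
  exact: L1.
have [p0 hp0] := set0Pn _ hne.
pose cf (p : I * I) := (F p.2 - F p.1) / ((F p.2 - F p.1) + (F' p.1 - F' p.2)).
case: (@extremumP R _ (fun x y : R => x <= y) p0 (fun p => p \in inv lt lt') cf
   lexx (@le_trans _ R) le_total hp0) => -[x0 y0] hxy hmin.
move: (hxy); rewrite inE /= => /andP[lxy lyx].
have Fxy := compat_le s c lxy.
have Fyx := compat_le s' c' lyx.
set sv := cf (x0, y0).
have /andP[s0 s1] : 0 <= sv <= 1 by exact: s_bounds.
pose G := fun x => F x + sv * (F' x - F x).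
have cG : compat G lt.
  move=> x y hG; apply/negPn/negP => nl.
  have nxy : x != y by apply: contraTneq hG => ->; rewrite ltxx.
  have [irr tr tot] := s; have [irr' tr' tot'] := s'.
  have lyx' : lt y x by move: (tot _ _ nxy); rewrite (negbTE nl).
  suff : G y <= G x by rewrite leNgt hG.
  case/boolP: (lt' y x) => hl'.
  - by apply: conv_le => //; [exact: (compat_le s c lyx')|exact: (compat_le s' c' hl')].
  - have nyx : y != x by rewrite eq_sym.
    have hl2 : lt' x y by move: (tot' _ _ nxy); rewrite (negbTE hl') orbF.
    have hin : (y, x) \in inv lt lt' by rewrite inE /= lyx' hl2.
    have := hmin _ hin; rewrite /cf /= => hs.
    apply: cross_le => //; [exact: (compat_le s c lyx')|exact: (compat_le s' c' hl2)].
pose lts := lex G lt'.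
have ss : sto lts := lex_sto G s'.
have cs : compat G lts := @lex_compat G lt'.
have Gxy : G x0 = G y0 by exact: cross_eq.
have hp : inv lts lt' \proper inv lt lt'.
  apply/properP; split.
  - apply/fintype.subsetP => -[x y]; rewrite !inE /= => /andP[a b]; rewrite b andbT.
    move: a; rewrite /lts /lex => /orP[h|/andP[_ h]]; first exact: cG.
    by exfalso; exact: (sto_asym s' h b).
  - exists (x0, y0) => //; rewrite inE /= /lts /lex Gxy ltxx eqxx /=.
    by apply/negP => /andP[h _]; exact: (sto_asym s' h lyx).
have hn' : (#|inv lts lt'| <= n)%N.
  by rewrite -ltnS; exact: leq_trans (proper_card hp) hn.
have hdG : forall v, `|G v - F' v| <= (1 - sv) * d.
  move=> v; have -> : G v - F' v = (1 - sv) * (F v - F' v) by rewrite /G; ring.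
  by rewrite normrM ger0_norm ?subr_ge0 // ler_wpM2l ?subr_ge0.
have hdF : forall v, `|F v - G v| <= sv * d.
  move=> v; have -> : F v - G v = sv * (F v - F' v) by rewrite /G; ring.
  by rewrite normrM ger0_norm // ler_wpM2l.
have [sg2 [sg2i hsg2]] := IH G F' lts lt' _ hn' ss s' cs c' hdG.
have [sg1 [sg1i hsg1]] := @L2 G _ lt lts (leqnn _) s ss cG cs.
exists (sg2 \o sg1); split; first exact: inj_comp.
move=> v; have [e1 e2] := hsg1 v; have [f1 f2] := hsg2 (sg1 v).
have -> : d = sv * d + (1 - sv) * d by ring.
split.
- apply: le_trans (ler_distD (G v) _ _) _; apply: lerD; first exact: hdF.
  by rewrite -e1.
- apply: (@edist_trans _ (gdeath G lt v)); first exact: L1.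
  by rewrite -e2.
Qed.

End Stab.

End StabMod.
Import StabMod.

Lemma wsumU (R : realType) (V : finType) (h : V -> R) (A B : {set V}) :
  [disjoint A & B] -> wsum h (A :|: B) = wsum h A + wsum h B.
Proof.
move=> dAB; rewrite /wsum -bigU //; apply: eq_bigl => x; by rewrite !inE.
Qed.

Lemma wsum_ge0 (R : realType) (V : finType) (h : V -> R) (A : {set V}) :
  (forall v, 0 <= h v) -> 0 <= wsum h A.
Proof. by move=> h0; apply: sumr_ge0. Qed.

Lemma wsum_le (R : realType) (V : finType) (h g : V -> R) (A : {set V}) :
  (forall v, h v <= g v) -> wsum h A <= wsum g A.
Proof. by move=> hg; apply: ler_sum. Qed.

Lemma wsum_gt0 (R : realType) (V : finType) (h : V -> R) (A : {set V}) x :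
  (forall v, 0 < h v) -> x \in A -> 0 < wsum h A.
Proof.
move=> h0 xA; rewrite /wsum (bigD1 x) //=; apply: ltr_pwDl => //.
by apply: sumr_ge0 => v _; apply: ltW.
Qed.

Lemma ratio_bound (R : realType) (Bk Bx Pk T eps alpha : R) :
  0 < T -> 0 < eps -> eps < 1 -> 0 < alpha ->
  Bk <= Pk -> Pk <= 2 * eps * T -> alpha * (1 - eps) * T <= Bx ->
  Bk / Bx <= (2 * eps) / (alpha * (1 - eps)).
Proof.
move=> T0 e0 e1 a0 h1 h2 h3.
have c0 : 0 < alpha * (1 - eps) by apply: mulr_gt0 => //; lra.
have Bx0 : 0 < Bx by apply: lt_le_trans h3; apply: mulr_gt0.
rewrite ler_pdivrMr // mulrAC ler_pdivlMr //.
have : Bk * (alpha * (1 - eps)) <= 2 * eps * T * (alpha * (1 - eps)).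
  by apply: ler_wpM2r; [exact: ltW|lra].
move=> h; apply: le_trans h _.
have -> : 2 * eps * T * (alpha * (1 - eps)) = 2 * eps * (alpha * (1 - eps) * T) by ring.
by rewrite ler_wpM2l //; lra.
Qed.

Lemma mix1 (R : realType) (aX bX aK bK : R) : 0 < bX -> 0 < bK ->
  (aX + aK) / (bX + bK) - aX / bX = (bK / (bX + bK)) * (aK / bK - aX / bX).
Proof.
move=> h1 h2; have h3 : bX + bK != 0 by apply/lt0r_neq0; apply: addr_gt0.
by field; rewrite h3 (lt0r_neq0 h1) (lt0r_neq0 h2).
Qed.

Lemma mix2 (R : realType) (aX bX aK bK : R) : 0 < bX -> 0 < bK ->
  (aX + aK) / (bX + bK) - aX / bX = (bK / bX) * (aK / bK - (aX + aK) / (bX + bK)).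
Proof.
move=> h1 h2; have h3 : bX + bK != 0 by apply/lt0r_neq0; apply: addr_gt0.
by field; rewrite h3 (lt0r_neq0 h1) (lt0r_neq0 h2).
Qed.

Lemma lowb (R : realType) (alpha B P L : R) : 0 < alpha -> 0 < L -> L <= P ->
  alpha <= B / P -> alpha * L <= B.
Proof.
move=> a0 L0 LP h; have P0 : 0 < P by apply: lt_le_trans LP.
move: h; rewrite ler_pdivlMr // => h; apply: le_trans h.
by rewrite ler_wpM2l // ltW.
Qed.

Theorem mainTheorem2 (R : realType) (V : finType) (E : rel V)
  (hE : symmetric E) (p : V -> R) (hp : forall v, 0 < p v)
  (k : nat) (hk : (2 <= k)%N) (eps : R) (heps0 : 0 < eps) (heps1 : eps < 1)
  (Vm Vm' : 'I_k -> {set V})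
  (hP : districting_plan E p eps Vm) (hP' : districting_plan E p eps Vm')
  (i j : 'I_k) (hij : i != j) (Vij : {set V})
  (hVij0 : Vij != finset.set0) (hVij : Vij \subset Vm i)
  (hVi' : Vm' i = Vm i :\: Vij) (hVj' : Vm' j = Vm j :|: Vij)
  (hVm' : forall m, m != i -> m != j -> Vm' m = Vm m)
  (hiso : forall m l, dual_adj E Vm m l = dual_adj E Vm' m l)
  (a b : V -> R) (hab : forall v, 0 <= a v /\ a v <= b v /\ b v <= p v)
  (hb : forall v, 0 < b v)
  (alpha : R) (halpha : 0 < alpha)
  (hbalpha : forall W, W \in [:: Vm i; Vm' i; Vm j; Vm' j] ->
      alpha <= wsum b W / wsum p W) :
  let f := fun W : {set V} => wsum a W / wsum b W in
  (bottleneck (pdiagram (dual_adj E Vm) (fun m => f (Vm m)))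
              (pdiagram (dual_adj E Vm') (fun m => f (Vm' m)))
   <= ((2 * eps) / (alpha * (1 - eps)) *
       Num.max `|f Vij - f (Vm i)| `|f Vij - f (Vm j)|)%:E)%E.
Proof.
cbv zeta; set f := fun W : {set V} => wsum a W / wsum b W.
set C := (2 * eps) / (alpha * (1 - eps)).
set d := C * _.
have C0 : 0 <= C by apply: divr_ge0; [lra|apply: mulr_ge0; lra].
have d0 : 0 <= d by apply: mulr_ge0 => //; rewrite le_max normr_ge0.
have hF : forall m, `|f (Vm m) - f (Vm' m)| <= d.
  have [cov [disj [_ bnd]]] := hP; have [_ [_ [_ bnd']]] := hP'.
  set Tt := wsum p [set: V] / k%:R in bnd bnd'.
  have [x0 x0in] := set0Pn _ hVij0.
  have T0 : 0 < Tt.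
    apply: divr_gt0; first exact: (@wsum_gt0 _ _ p _ x0).
    by rewrite ltr0n; apply: leq_trans hk.
  have dA : [disjoint (Vm i :\: Vij) & Vij].
    by apply/pred0P => x /=; rewrite !inE; case: (x \in Vij); rewrite ?andbF.
  have eI : Vm i = (Vm i :\: Vij) :|: Vij.
    apply/setP => x; rewrite !inE; case xK: (x \in Vij) => /=; rewrite ?andbT ?orbF ?orbT //.
    exact: (fintype.subsetP hVij).
  have dB : [disjoint Vm j & Vij].
    by apply: disjointWr hVij _; apply: disj; rewrite eq_sym.
  have bK0 : 0 < wsum b Vij := @wsum_gt0 _ _ _ _ x0 hb x0in.
  have Tpos : 0 < (1 - eps) * Tt by apply: mulr_gt0 => //; lra.
  have maxl : forall x y : R, x <= Num.max x y by move=> x y; rewrite le_max lexx.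
  have maxr : forall x y : R, y <= Num.max x y by move=> x y; rewrite le_max lexx orbT.
  have pX : (1 - eps) * Tt <= wsum p (Vm i :\: Vij).
    by rewrite -hVi'; case/andP: (bnd' i).
  have pKle : wsum p Vij <= 2 * eps * Tt.
    have /andP[_ h] := bnd i; move: h; rewrite eI wsumU // => h.
    have e2 : (1 + eps) * Tt - (1 - eps) * Tt = 2 * eps * Tt by ring.
    lra.
  have bKp : wsum b Vij <= wsum p Vij by apply: wsum_le => v; case: (hab v) => _ [].
  move=> m; case: (eqVneq m i) => [->|mi].
  - have bX : alpha * ((1 - eps) * Tt) <= wsum b (Vm i :\: Vij).
      apply: (@lowb _ _ _ _ _ halpha Tpos pX); rewrite -hVi'; apply: hbalpha.
      by rewrite !inE eqxx ?orbT.
    have bX0 : 0 < wsum b (Vm i :\: Vij).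
      by apply: lt_le_trans bX; apply: mulr_gt0.
    have fVi : f (Vm i) = (wsum a (Vm i :\: Vij) + wsum a Vij) /
                          (wsum b (Vm i :\: Vij) + wsum b Vij).
      by rewrite /f {1 2}eI !wsumU.
    rewrite hVi' fVi {1}/f mix2 // -fVi normrM ger0_norm; last first.
      by apply: divr_ge0; apply: ltW.
    have rb : wsum b Vij / wsum b (Vm i :\: Vij) <= C.
      apply: (@ratio_bound _ _ _ _ _ _ _ T0 heps0 heps1 halpha bKp pKle); by rewrite -mulrA.
    apply: le_trans (ler_wpM2r (normr_ge0 _) rb) _.
    by apply: ler_wpM2l => //; apply: maxl.
  case: (eqVneq m j) => [->|mj].
  - have bY : alpha * ((1 - eps) * Tt) <= wsum b (Vm j).
      apply: (@lowb _ _ _ (wsum p (Vm j)) _ halpha Tpos); first by case/andP: (bnd j).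
      by apply: hbalpha; rewrite !inE eqxx ?orbT.
    have bY0 : 0 < wsum b (Vm j).
      by apply: lt_le_trans bY; apply: mulr_gt0.
    have bY' : alpha * ((1 - eps) * Tt) <= wsum b (Vm j) + wsum b Vij.
      rewrite -wsumU // -hVj'; apply: (@lowb _ _ _ (wsum p (Vm' j)) _ halpha Tpos); first by case/andP: (bnd' j).
      by apply: hbalpha; rewrite !inE eqxx ?orbT.
    have fVj : f (Vm' j) = (wsum a (Vm j) + wsum a Vij) / (wsum b (Vm j) + wsum b Vij).
      by rewrite /f hVj' !wsumU.
    rewrite fVj distrC mix1 // normrM ger0_norm; last first.
      by apply: divr_ge0; apply: ltW => //; apply: addr_gt0.
    have rb : wsum b Vij / (wsum b (Vm j) + wsum b Vij) <= C.
      apply: (@ratio_bound _ _ _ _ _ _ _ T0 heps0 heps1 halpha bKp pKle); by rewrite -mulrA.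
    apply: le_trans (ler_wpM2r (normr_ge0 _) rb) _.
    by apply: ler_wpM2l => //; apply: maxr.
  by rewrite hVm' // subrr normr0.
set F := fun m => f (Vm m).
set F' := fun m => f (Vm' m).
have eadj : dual_adj E Vm' = dual_adj E Vm.
  by apply/funext => m; apply/funext => l; rewrite hiso.
have adj_sym : symmetric (dual_adj E Vm).
  move=> m l; rewrite /dual_adj eq_sym; congr andb.
  apply/existsP/existsP => -[x /existsP[y /and3P[h1 h2 h3]]]; exists y; apply/existsP;
    exists x; by rewrite h1 h2 hE.
have so : forall G : 'I_k -> R, sto (older G).
  by move=> G; rewrite older_lex; apply: lex_sto; exact: rank_sto.
have co : forall G : 'I_k -> R, compat G (older G).
  by move=> G; rewrite older_lex; apply: lex_compat.
have [sg [sgi hsg]] := stab adj_sym (leqnn _) (so F) (so F') (co F) (co F') hF.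
rewrite eadj.
apply: (@le_trans _ _ (matching_cost (pdiagram (dual_adj E Vm) F)
   (pdiagram (dual_adj E Vm) F') (fun m => Some (sg m)))).
  apply: ereal_inf_lbound; exists (fun m => Some (sg m)) => //.
  by move=> m m' l [<-] [] /sgi.
apply: ge_ereal_sup => x [[[->|[m [l [[<-] ->]]]]|[m [//]]]|[l [hl _]]].
- by rewrite lee_fin.
- rewrite /linf_pt /pdiagram /= ge_max lee_fin; have [h1 h2] := hsg m.
  by rewrite h1 /=; exact: h2.
- exfalso; have [g _ gK] := injF_bij sgi.
  by move: (hl (g l)); rewrite gK eqxx.
Qed.
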